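(* Let $(M,d)$ be a metric space, $\mathsf{P}\subseteq M$ a set of $n$ points, $1\le\ell\le k\le n$ integers, $m=\lfloor k/\ell\rfloor$, $c\ge1$. Let $Q=\{q_1,\dots,q_m\}\subseteq\mathsf{P}$ satisfy $\max_{p\in\mathsf{P}} d_Q(p,1)\le c\,r_{\mathrm{cen}}$, where $r_{\mathrm{cen}}=\min_{S\subseteq\mathsf{P},|S|=m}\max_{p\in\mathsf{P}} d_S(p,1)$. Let $C\subseteq\mathsf{P}$ with $|C|=k$ and $C\supseteq\bigcup_{i=1}^m N_{\mathsf{P}}(q_i,\ell)$, and let $r_{\mathrm{alg}}=\max_{p\in\mathsf{P}} d_C(p,\ell)$, $r_{\mathrm{opt}}=\min_{C'\subseteq\mathsf{P},|C'|=k}\max_{p\in\mathsf{P}} d_{C'}(p,\ell)$. Then $r_{\mathrm{alg}}\le r_{\mathrm{opt}}+2c\,r_{\mathrm{cen}}$.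
   Context: For a finite set $S\subseteq M$, a point $p\in M$ and an integer $1\le i\le|S|$, $d_S(p,i)$ denotes the radius of the smallest closed ball centered at $p$ containing at least $i$ points of $S$. Nearest neighbors are ordered lexicographically by $(d(p,s),\text{index of }s)$; $N_S(p,i)$ is the set of the first $i$ points of $S$ in this order, $|N_S(p,i)|=i$. *)

(* Defs.v *)
From HB Require Import structures.
From mathcomp Require Import all_boot all_order all_algebra.
Set Implicit Arguments. Unset Strict Implicit. Unset Printing Implicit Defensive.
Import Order.TTheory GRing.Theory Num.Theory.
Local Open Scope ring_scope.

(* The point set P is given as an injective family pts : 'I_n -> M; the
   index of pts s is the ordinal s.  Subsets of P are {set 'I_n}. *)

Definition ball_card (R : realFieldType) (M : Type) (n : nat)
  (d : M -> M -> R) (pts : 'I_n -> M) (S : {set 'I_n}) (p : M) (r : R) : nat :=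
  #|[set s in S | d p (pts s) <= r]|.

(* d_S(p,i): smallest radius of a closed ball around p containing at least i
   points of S.  The smallest such radius is always the distance from p to a
   point of S, so we take the minimum over those candidate radii. *)
Definition dS (R : realFieldType) (M : Type) (n : nat)
  (d : M -> M -> R) (pts : 'I_n -> M) (S : {set 'I_n}) (p : M) (i : nat) : R :=
  let cand := [seq d p (pts s) | s <- enum S &
                (i <= ball_card d pts S p (d p (pts s)))%N] in
  \big[Order.min/head 0 cand]_(x <- cand) x.

Definition lexlt (R : realFieldType) (M : Type) (n : nat)
  (d : M -> M -> R) (pts : 'I_n -> M) (p : M) (t s : 'I_n) : bool :=
  (d p (pts t) < d p (pts s)) ||
  ((d p (pts t) == d p (pts s)) && (nat_of_ord t < nat_of_ord s)%N).

Definition NN (R : realFieldType) (M : Type) (n : nat)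
  (d : M -> M -> R) (pts : 'I_n -> M) (S : {set 'I_n}) (p : M) (i : nat)
  : {set 'I_n} :=
  [set s in S | (#|[set t in S | lexlt d pts p t s]| < i)%N].

(* max_{p in P} d_S(p,i)  (all values are >= 0, so 0 is a neutral start) *)
Definition radius (R : realFieldType) (M : Type) (n : nat)
  (d : M -> M -> R) (pts : 'I_n -> M) (S : {set 'I_n}) (i : nat) : R :=
  \big[Order.max/0]_(p < n) dS d pts S (pts p) i.

(* minimum of a nonnegative f over the (nonempty) family {x | P x};
   the start value is the maximum over the same family, so it does not
   affect the minimum when the family is nonempty. *)
Definition fmin (R : realFieldType) (T : finType) (P : pred T) (f : T -> R) : R :=
  \big[Order.min/(\big[Order.max/0]_(x | P x) f x)]_(x | P x) f x.

Definition r_cen (R : realFieldType) (M : Type) (n : nat)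
  (d : M -> M -> R) (pts : 'I_n -> M) (m : nat) : R :=
  fmin (fun S : {set 'I_n} => #|S| == m) (fun S => radius d pts S 1).

Definition r_opt (R : realFieldType) (M : Type) (n : nat)
  (d : M -> M -> R) (pts : 'I_n -> M) (k l : nat) : R :=
  fmin (fun S : {set 'I_n} => #|S| == k) (fun S => radius d pts S l).

(* Main.v *)
Require Import Defs.
From HB Require Import structures.
From mathcomp Require Import all_boot all_order all_algebra.
From mathcomp Require Import lra.
Import Order.TTheory GRing.Theory Num.Theory.
Local Open Scope ring_scope.

Section Aux.
Variables (R : realFieldType) (M : Type) (d : M -> M -> R) (n : nat)
  (pts : 'I_n -> M).
Hypothesis dge0 : forall x y, 0 <= d x y.

Lemma big_min_mem (s : seq R) (x0 : R) :
  \big[Order.min/x0]_(x <- s) x \in x0 :: s.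
Proof.
elim: s => [|a s IH]; first by rewrite big_nil mem_head.
rewrite big_cons minElt; case: ifP => _; first by rewrite !inE eqxx orbT.
move: IH; rewrite !inE => /orP[->|->] //; by rewrite !orbT.
Qed.

Lemma big_min_le (s : seq R) (x0 y : R) :
  y \in s -> \big[Order.min/x0]_(x <- s) x <= y.
Proof. by move=> ys; apply: (@ge_bigmin_seq _ _ _ s x0 y xpredT id). Qed.

Lemma ball_mono S p r r' : r <= r' ->
  (ball_card d pts S p r <= ball_card d pts S p r')%N.
Proof.
move=> rr; apply: subset_leq_card; apply/subsetP => t.
rewrite !inE => /andP[-> h] /=; exact: le_trans h rr.
Qed.

Lemma ball_full S p : exists r, ball_card d pts S p r = #|S|.
Proof.
exists (\big[Order.max/0]_(t | t \in S) d p (pts t)).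
rewrite /ball_card (_ : [set s in S | _] = S) //; apply/setP => t; rewrite inE.
case: (boolP (t \in S)) => //= tS.
by apply: (@le_bigmax_cond _ _ _ 0 t (fun t => t \in S)).
Qed.

Lemma dS_key S p i r : (0 < i)%N -> (i <= ball_card d pts S p r)%N ->
  dS d pts S p i <= r /\ (i <= ball_card d pts S p (dS d pts S p i))%N.
Proof.
move=> i0 hr.
set B := [set s in S | d p (pts s) <= r].
have : (0 < #|B|)%N by apply: leq_trans hr.
case/card_gt0P => s0 Bs0.
have [s Bs hs] := @eq_bigmax _ _ _ 0 s0 (fun t => t \in B)
   (fun t => d p (pts t)) Bs0 (fun t _ => dge0 p (pts t)).
have Bs' : s \in B by [].
move: (Bs'); rewrite inE => /andP[sS hsr].
have hbc : (i <= ball_card d pts S p (d p (pts s)))%N.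
  apply: (leq_trans hr); apply: subset_leq_card; apply/subsetP => t.
  rewrite !inE => /andP[tS htr]; rewrite tS /= -hs.
  apply: (@le_bigmax_cond _ _ _ 0 t (fun t => t \in B)).
  by rewrite inE tS.
set cand := [seq d p (pts s) | s <- enum S &
                (i <= ball_card d pts S p (d p (pts s)))%N].
have hmem : d p (pts s) \in cand.
  by apply: map_f; rewrite mem_filter hbc mem_enum.
have hdS : dS d pts S p i = \big[Order.min/head 0 cand]_(x <- cand) x by [].
have hin : dS d pts S p i \in cand.
  have := big_min_mem cand (head 0 cand); rewrite -hdS.
  rewrite inE => /orP[/eqP ->|//].
  by move: hmem; case: (cand) => //= a c _; rewrite mem_head.
split.
  rewrite hdS; apply: le_trans hsr; exact: big_min_le.
case/mapP: hin => t; rewrite mem_filter => /andP[ht _] ->; exact: ht.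
Qed.

Lemma card_lt_ord (l : nat) : (l <= n)%N -> #|[set j : 'I_n | (j < l)%N]| = l.
Proof.
move=> ln.
have -> : [set j : 'I_n | (j < l)%N] = [set widen_ord ln j | j : 'I_l].
  apply/setP => j; rewrite inE; apply/idP/imsetP.
    by move=> jl; exists (Ordinal jl) => //; apply: val_inj.
  by case=> j' _ ->; rewrite /= ltn_ord.
by rewrite card_imset ?card_ord //; by move=> a b /(congr1 val) /= /val_inj.
Qed.

Section Rank.
Variable (x : M).
Hypothesis pinj : injective pts.
Let lt := lexlt d pts x.

Lemma lt_irr s : ~~ lt s s.
Proof. by rewrite /lt /lexlt ltxx ltnn andbF. Qed.

Lemma lt_trans' a b c : lt a b -> lt b c -> lt a c.
Proof.
rewrite /lt /lexlt => /orP[h1|/andP[/eqP e1 h1]] /orP[h2|/andP[/eqP e2 h2]].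
- by rewrite (lt_trans h1 h2).
- by rewrite -e2 h1.
- by rewrite e1 h2.
- by rewrite e1 e2 (ltn_trans h1 h2) andbT; apply/orP; right.
Qed.

Lemma lt_total a b : a != b -> lt a b || lt b a.
Proof.
move=> ab; rewrite /lt /lexlt.
case: (ltgtP (d x (pts a)) (d x (pts b))) => //= _.
by rewrite -val_eqE /= in ab; rewrite -neq_ltn.
Qed.

Definition rk (s : 'I_n) := #|[set t in [set: 'I_n] | lt t s]|.

Lemma rk_lt a b : lt a b -> (rk a < rk b)%N.
Proof.
move=> ab; apply: proper_card; apply/properP; split.
  apply/subsetP => t; rewrite !inE /= => h; exact: lt_trans' h ab.
by exists a; rewrite !inE //= lt_irr.
Qed.

Lemma rk_n s : (rk s < n)%N.
Proof.
rewrite -[X in (_ < X)%N](card_ord n) -cardsT; apply: proper_card; rewrite properT.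
apply/negP => /eqP h; have := in_setT s; rewrite -h inE /=. by rewrite (negbTE (lt_irr s)) andbF.
Qed.

Lemma rk_inj : injective rk.
Proof.
move=> a b e; apply/eqP; apply/negPn/negP => ab.
case/orP: (lt_total _ _ ab) => /rk_lt; by rewrite e ltnn.
Qed.

Lemma NN_card l : (l <= n)%N -> (l <= #|NN d pts [set: 'I_n] x l|)%N.
Proof.
move=> ln.
pose f (s : 'I_n) : 'I_n := Ordinal (rk_n s).
have finj : injective f by move=> a b /(congr1 val) /= /rk_inj.
have -> : NN d pts [set: 'I_n] x l = f @^-1: [set j : 'I_n | (j < l)%N].
  by apply/setP => s; rewrite !inE.
by rewrite card_preimset // card_lt_ord.
Qed.

End Rank.
End Aux.

Theorem claim3 (R : realFieldType) (M : Type) (d : M -> M -> R)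
  (d_eq0 : forall x y, d x y = 0 <-> x = y)
  (d_sym : forall x y, d x y = d y x)
  (d_tri : forall x y z, d x z <= d x y + d y z)
  (n : nat) (pts : 'I_n -> M) (pts_inj : injective pts)
  (l k : nat) (c : R)
  (hl : (1 <= l)%N) (hlk : (l <= k)%N) (hkn : (k <= n)%N) (hc : 1 <= c)
  (Q : {set 'I_n}) (hQ : #|Q| = (k %/ l)%N)
  (hQcen : radius d pts Q 1 <= c * r_cen d pts (k %/ l))
  (C : {set 'I_n}) (hC : #|C| = k)
  (hCN : forall q, q \in Q -> NN d pts [set: 'I_n] (pts q) l \subset C) :
  radius d pts C l <= r_opt d pts k l + 2 * c * r_cen d pts (k %/ l).
Proof.
have dge0 : forall x y, 0 <= d x y.
  move=> x y; have := d_tri x y x; rewrite (proj2 (d_eq0 x x) erefl) (d_sym y x).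
  lra.
set m := (k %/ l)%N.
have l0 : (0 < l)%N by [].
have m0 : (0 < m)%N by rewrite divn_gt0.
have rcen0 : 0 <= r_cen d pts m.
  apply: le_bigmin; first exact: bigmax_ge_id.
  move=> S _; exact: bigmax_ge_id.
have [Cs hCs eqopt] := @eq_bigmin _ _ _
   (\big[Order.max/0]_(S : {set 'I_n} | #|S| == k) radius d pts S l)
   [set j : 'I_n | (j < k)%N] (fun S : {set 'I_n} => #|S| == k)
   (fun S => radius d pts S l)
   (introT eqP (@card_lt_ord n k hkn))
   (fun (S : {set 'I_n}) (hS : #|S| == k) => @le_bigmax_cond _ _ _ 0 S (fun S : {set 'I_n} => #|S| == k) (fun S => radius d pts S l) hS).
have ropt : r_opt d pts k l = radius d pts Cs l by [].
have ropt0 : 0 <= r_opt d pts k l by rewrite ropt; exact: bigmax_ge_id.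
have crc : 0 <= c * r_cen d pts m by apply: mulr_ge0 => //; lra.
apply: bigmax_le; first by lra.
move=> p _.
have [rQ hrQ] := @ball_full R M d n pts Q (pts p).
have [_ hQ1] := @dS_key R M d n pts dge0 Q (pts p) 1 rQ erefl
  (ltac:(by rewrite hrQ hQ)).
case/card_gt0P: hQ1 => q; rewrite inE => /andP[qQ hpq].
have hdQ : dS d pts Q (pts p) 1 <= radius d pts Q 1.
  exact: (@le_bigmax _ _ _ 0 (fun p => dS d pts Q (pts p) 1) p).
have hpq' : d (pts p) (pts q) <= c * r_cen d pts m.
  by apply: le_trans hpq _; apply: le_trans hdQ hQcen.
have [rC hrC] := @ball_full R M d n pts Cs (pts q).
have hCs' : #|Cs| = k by apply/eqP.
have [hle hbc] := @dS_key R M d n pts dge0 Cs (pts q) l rC l0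
  (ltac:(by rewrite hrC hCs')).
have hdC : dS d pts Cs (pts q) l <= r_opt d pts k l.
  rewrite ropt; exact: (@le_bigmax _ _ _ 0 (fun p => dS d pts Cs (pts p) l) q).
have hball : (l <= ball_card d pts [set: 'I_n] (pts q) (r_opt d pts k l))%N.
  apply: (leq_trans hbc); apply: (leq_trans (@ball_mono R M d n pts Cs (pts q) _ _ hdC)).
  apply: subset_leq_card; apply/subsetP => t; rewrite !inE => /andP[_ ->].
  by [].
have hNN : NN d pts [set: 'I_n] (pts q) l \subset
    [set s in [set: 'I_n] | d (pts q) (pts s) <= r_opt d pts k l].
  apply/subsetP => s; rewrite !inE /= => hs.
  rewrite leNgt; apply/negP => hgt.
  move: hs; rewrite ltnNge => /negP; apply.
  apply: (leq_trans hball); apply: subset_leq_card; apply/subsetP => t.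
  rewrite !inE /= => ht; rewrite /lexlt.
  by rewrite (le_lt_trans ht hgt).
have hcard := @NN_card R M d n pts (pts q) l (leq_trans hlk hkn).
have hfin : (l <= ball_card d pts C (pts p)
               (c * r_cen d pts m + r_opt d pts k l))%N.
  apply: (leq_trans hcard); apply: subset_leq_card; apply/subsetP => s hs.
  rewrite inE (subsetP (hCN q qQ) s hs) /=.
  move: (subsetP hNN s hs); rewrite !inE /= => hqs.
  apply: le_trans (d_tri _ (pts q) _) _; exact: lerD.
have [hfin' _] := @dS_key R M d n pts dge0 C (pts p) l _ l0 hfin.
apply: le_trans hfin' _.
lra.
Qed.
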